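(* Let $(X,Y)$ be a conditionally dependent (CD) random vector with function $s$. Then $s$ is bounded on $D_Y$: there exists $C>0$ such that $s(y)\le C$ for all $y\in D_Y$.
   Context: $X$ is real-valued with distribution $F$ such that $\overline F(x)=1-F(x)>0$ for all $x\in\mathbb{R}$, and $Y$ takes values in $(0,\infty)$ with distribution $G$. Let $D_Y=\{y\in(0,\infty):\mathrm P(Y\in(y-\delta,y+\delta))>0\ \forall\delta>0\}$. For $x\in\mathbb{R}$ and $y\in D_Y$, $\mathrm P(X>x\mid Y=y)=\lim_{t\downarrow0}\mathrm P(X>x,Y\in[y,y+t))/\mathrm P(Y\in[y,y+t))$ when this limit exists. $(X,Y)$ is conditionally dependent (CD) with function $s$ if $s$ is a positive measurable function on $[0,\infty)$ such that these conditional tails exist and $\lim_{x\to\infty}\sup_{y\in D_Y}|\mathrm P(X>x\mid Y=y)/(\overline F(x)s(y))-1|=0$. *)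

(* Defs.v *)
From HB Require Import structures.
From mathcomp Require Import all_boot all_order all_algebra.
From mathcomp Require Import all_classical all_reals all_analysis.
Set Implicit Arguments. Unset Strict Implicit. Unset Printing Implicit Defensive.
Import Order.TTheory GRing.Theory Num.Theory.
Import numFieldNormedType.Exports.
Local Open Scope classical_set_scope.
Local Open Scope ring_scope.

Section CD.
Context {d : measure_display} {T : measurableType d} {R : realType}
  (P : probability T R).

Definition prob (A : set T) : R := fine (P A).

Definition Ftail (X : T -> R) (x : R) : R := prob [set w | x < X w].

Definition DY (Y : T -> R) : set R :=
  [set y | 0 < y /\ forall δ : R, 0 < δ ->
     0 < prob (Y @^-1` `](y - δ), (y + δ)[)].

(* P(X > x | Y = y) exists and equals l: the ratio
   P(X > x, Y in [y,y+t)) / P(Y in [y,y+t)) is (eventually) well defined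
   and tends to l as t decreases to 0. *)
Definition cond_tail_is (X Y : T -> R) (x y l : R) : Prop :=
  (\forall t \near 0^'+, 0 < prob (Y @^-1` `[y, (y + t)[)) /\
  ((fun t => prob ([set w | x < X w] `&` Y @^-1` `[y, (y + t)[) /
             prob (Y @^-1` `[y, (y + t)[)) @ 0^'+ --> l).

Definition CD (X Y : T -> R) (s : R -> R) : Prop :=
  (forall y, 0 <= y -> 0 < s y) /\
  measurable_fun (`[0, +oo[%classic : set R) s /\
  exists cp : R -> R -> R,
    (forall x y, DY Y y -> cond_tail_is X Y x y (cp x y)) /\
    ((fun x => ereal_sup [set (`| cp x y / (Ftail X x * s y) - 1 |)%:E
                         | y in DY Y]) @ +oo --> 0%E).

End CD.

(* Main.v *)
Require Import Defs.
From HB Require Import structures.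
From mathcomp Require Import all_boot all_order all_algebra.
From mathcomp Require Import all_classical all_reals all_analysis.
From mathcomp Require Import lra.
Import Order.TTheory GRing.Theory Num.Theory.
Import numFieldNormedType.Exports.
Local Open Scope classical_set_scope.
Local Open Scope ring_scope.

Theorem proposition2p4 (d : measure_display) (T : measurableType d)
  (R : realType) (P : probability T R) (X Y : {RV P >-> R}) (s : R -> R) :
  (forall x : R, 0 < Ftail P X x) ->
  (forall w, 0 < Y w) ->
  CD P X Y s ->
  exists C : R, 0 < C /\ forall y, DY P Y y -> s y <= C.
Proof.
move=> HF HY [Hpos [_ [cp [Hcond Hsup]]]].
have mpre (f : {RV P >-> R}) B : measurable B -> measurable (f @^-1` B).
  move=> mB; have mf : measurable_fun setT f by exact/measurable_funP.
  by have := mf measurableT B mB; rewrite setTI.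
have probmono A B : measurable A -> measurable B -> A `<=` B -> prob P A <= prob P B.
  move=> mA mB AB; rewrite /prob; apply: fine_le; try exact: fin_num_measure.
  by apply: le_measure => //; rewrite inE.
have cp_le1 x y : DY P Y y -> cp x y <= 1.
  move=> /(Hcond x) [Hev Hlim]; apply: (cvgr_to_le Hlim).
  apply: filterS Hev => t Ht.
  rewrite ler_pdivrMr // mul1r; apply: probmono.
  - apply: measurableI; last exact: mpre (measurable_itv _).
    have -> : [set w | x < X w] = X @^-1` `]x, +oo[.
      by apply/seteqP; split => w /=; rewrite in_itv /= andbT.
    exact: mpre (measurable_itv _).
  - exact: mpre (measurable_itv _).
  - by move=> w [].
have /fine_cvgP [Hfin Hf] := Hsup.
Show. have half : (0:R) < 1/2 by rewrite divr_gt0.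
have Hlt := cvgr_lt _ Hf _ half.
have [x0 [fin0 lt0]] : exists x0, _ /\ _ := filter_ex (filterI Hfin (Hlt _)).
exists (2 / Ftail P X x0); split; first by rewrite divr_gt0.
move=> y Dy.
have hy : 0 < s y := Hpos y (ltW Dy.1).
have F0 := HF x0.
have hub : ((`|cp x0 y / (Ftail P X x0 * s y) - 1|)%:E <=
  ereal_sup [set (`|cp x0 y' / (Ftail P X x0 * s y') - 1|)%:E | y' in DY P Y])%E.
  by apply: ereal_sup_ubound; exists y.
have : `|cp x0 y / (Ftail P X x0 * s y) - 1| < 1/2.
  rewrite -lte_fin; apply: (le_lt_trans hub); rewrite -(fineK fin0) lte_fin; exact: lt0.
rewrite ltr_norml => /andP [h1 _].
have h2 : 1/2 < cp x0 y / (Ftail P X x0 * s y) by lra.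
rewrite ltr_pdivlMr ?mulr_gt0 // in h2.
have := cp_le1 x0 y Dy.
rewrite ler_pdivlMr // => h3.
nra.
Qed.
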